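(* Fix $0<\delta<1$, let $\epsilon=\frac12+\frac\delta2$, $\epsilon'=\frac12$, $c=\frac8\delta$, and let $k_n=\lceil 2^{\sqrt n}\rceil$. For all sufficiently large even $n$ there exists a subset $\mathcal M_n\subseteq\mathcal G_n$ with $|\mathcal M_n|\le k_n$ such that there is no graph $U$ with at most $2^{n^{\frac12-\delta}}$ vertices containing every graph of $\mathcal M_n$ as an induced subgraph.
   Context: For even $n$, a good graph on $n$ vertices is a bipartite graph with vertex set $[n]$ and parts $\{1,\dots,\frac n2\}$ and $\{\frac n2+1,\dots,n\}$, having exactly $\lfloor(\frac n2)^{2-\epsilon}\rfloor$ edges, such that every induced subgraph with at most $(\frac n2)^{\epsilon'}$ vertices has a vertex of degree less than $c$ (within that subgraph). $\mathcal G_n$ denotes the set of good graphs on $n$ vertices. A graph $F$ is contained in $U$ as an induced subgraph if there is an injection $\pi:V(F)\to V(U)$ with $xy\in E(F)\iff\pi(x)\pi(y)\in E(U)$. *)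

(* Defs.v *)
(* NB: with MathComp loaded, the key %R denotes ring_scope, so real-number
   expressions are written with R_scope opened locally. *)
From Stdlib Require Import Reals.
From mathcomp Require Import all_boot.

Set Implicit Arguments.
Unset Strict Implicit.
Unset Printing Implicit Defensive.

Definition sgraph (n : nat) := {set {set 'I_n}}.

Definition is_simple (n : nat) (E : sgraph n) : bool :=
  [forall e in E, #|e| == 2].

Local Open Scope R_scope.

Definition is_floor (m : nat) (x : R) : Prop := INR m <= x /\ x < INR m + 1.
Definition is_ceil (k : nat) (x : R) : Prop := INR k - 1 < x /\ x <= INR k.

Definition deg_in (n : nat) (E : sgraph n) (S : {set 'I_n}) (v : 'I_n) : nat :=
  #|[set u in S | [set u; v] \in E]|.

(* Vertices [n] = {1..n} are represented by 'I_n = {0..n-1} (vertex i+1 <-> i);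
   the part {1..n/2} corresponds to indices i < n/2. *)
Definition good_graph (n : nat) (eps eps' c : R) (E : sgraph n) : Prop :=
  is_simple E /\
  (forall e, e \in E -> exists x y : 'I_n, e = [set x; y] /\ (x < n./2 <= y)%N) /\
  is_floor #|E| (Rpower (INR n / 2) (2 - eps)) /\
  (forall S : {set 'I_n}, (0 < #|S|)%N -> INR #|S| <= Rpower (INR n / 2) eps' ->
     exists2 v, v \in S & INR (deg_in E S v) < c).

Definition induced_sub (n N : nat) (F : sgraph n) (U : sgraph N) : Prop :=
  exists pi : 'I_n -> 'I_N, injective pi /\
    forall x y : 'I_n, ([set x; y] \in F) = ([set pi x; pi y] \in U).

(* Main.v *)
Require Import Defs.
From Stdlib Require Import Reals.
From mathcomp Require Import all_boot.
From Stdlib Require Import Lra Lia ZArith Classical ClassicalEpsilon.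
From mathcomp Require Import all_boot zify.
Set Implicit Arguments. Unset Strict Implicit. Unset Printing Implicit Defensive.

Lemma bin_pow2 k p : (2 * k <= p)%N -> (2 ^ k <= 'C(p, k))%N.
Proof.
elim: k p => [|k IH] p hp; first by rewrite bin0.
case: p hp => [|p] hp; first by lia.
have := mul_bin_diag p.+1 k => /=.
have h1 := IH p ltac:(lia).
move=> e. rewrite expnS.
have : (k.+1 * (2 * 2 ^ k) <= k.+1 * 'C(p.+1, k.+1))%N.
  rewrite -e. nia.
by rewrite leq_pmul2l.
Qed.

Lemma binT j e P : (j <= e)%N -> (e <= P)%N ->
  ('C(P - j, e - j) * P ^ j <= 'C(P, e) * e ^ j)%N.
Proof.
elim: j => [|j IH] hj heP; first by rewrite !subn0 !expn0 !muln1.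
have IH' := IH ltac:(lia) heP.
have hd := mul_bin_diag (P - j) (e - j.+1).
have e1 : ((P - j).-1 = P - j.+1)%N by lia.
have e2 : ((e - j.+1).+1 = e - j)%N by lia.
rewrite e1 e2 in hd.
have hpos : (0 < P - j)%N by lia.
rewrite -(leq_pmul2l hpos).
have goal : ((P - j) * ('C(P - j.+1, e - j.+1) * P ^ j.+1) <= (P - j) * ('C(P, e) * e ^ j.+1))%N.
  rewrite expnS mulnA hd.
  have h : ((e - j) * P <= (P - j) * e)%N by nia.
  have := leq_mul h IH'. 
  move=> h2. apply: leq_trans _ (leq_trans h2 _).
  - rewrite [X in (X <= _)%N]mulnC -!mulnA. rewrite leq_eqVlt; apply/orP; left; apply/eqP.
    nia.
  - rewrite leq_eqVlt; apply/orP; left; apply/eqP. rewrite expnS. nia.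
exact: goal.
Qed.
Lemma expn_mono a b k : (a <= b)%N -> (a ^ k <= b ^ k)%N.
Proof. move=> h; elim: k => [|k IH]; first by []. rewrite !expnS; exact: leq_mul. Qed.

Lemma ffact_le n k : (n ^_ k <= n ^ k)%N.
Proof.
elim: k n => [|k IH] n; first by rewrite ffactn0.
rewrite ffactnS expnS. apply: leq_mul => //.
apply: leq_trans (IH _) _. apply: expn_mono. lia.
Qed.

Lemma bin_fact_le a t : ('C(a, t) * t`! <= a ^ t)%N.
Proof. rewrite bin_ffact; exact: ffact_le. Qed.

Open Scope R_scope.

Lemma exp_pow_n a t : exp a ^ t = exp (INR t * a).
Proof. rewrite -Rpower_pow; last exact: exp_pos. by rewrite /Rpower ln_exp. Qed.

Lemma pow1t t : (0 < t)%N -> (1 + / INR t) ^ t <= 3.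
Proof.
move=> ht.
have hpos : 0 < INR t by apply: lt_0_INR; apply/ltP.
have h1 : 1 + / INR t <= exp (/ INR t).
  have := exp_ineq1 (/ INR t). have := Rinv_0_lt_compat _ hpos. move=> h0 h; have := h ltac:(lra). lra.
have h0 := Rinv_0_lt_compat _ hpos.
apply: Rle_trans (pow_incr (1 + / INR t) (exp (/ INR t)) t ltac:(lra)) _.
rewrite exp_pow_n. have -> : INR t * / INR t = 1 by field; lra.
have := exp_le_3. lra.
Qed.

Lemma fact_lb t : INR t ^ t <= 3 ^ t * INR (t`!).
Proof.
elim: t => [|t IH]; first by simpl; lra.
rewrite factS. change (t.+1 * t`!)%N with (Nat.mul t.+1 t`!). rewrite mult_INR.
case: t IH => [|t] IH; first by simpl; lra.
set u := t.+1 in IH *.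
have hu : 0 < INR u by apply: lt_0_INR; lia.
have e1 : INR u.+1 = INR u * (1 + / INR u) by rewrite S_INR; field; lra.
have hb := pow1t (t:=u) ltac:(by []).
have hf : 0 <= INR (u`!) by apply: pos_INR.
have ep : INR u.+1 ^ u.+1 = INR u.+1 * (INR u ^ u * (1 + / INR u) ^ u).
  by rewrite -Rpow_mult_distr -e1.
rewrite ep.
have h3 : 0 <= INR u ^ u by apply: pow_le; lra.
have hq : 0 <= (1 + / INR u) ^ u by apply: pow_le; have := Rinv_0_lt_compat _ hu; lra.
have : INR u ^ u * (1 + / INR u) ^ u <= 3 ^ u * INR u`! * 3.
  apply: Rle_trans (Rmult_le_compat_l _ _ _ h3 hb) _. nra.
have hu1 : 0 <= INR u.+1 by apply: pos_INR.
move=> hX. apply: Rle_trans (Rmult_le_compat_l _ _ _ hu1 hX) _.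
have e3 : 3 ^ u.+1 = 3 * 3 ^ u by []. rewrite e3. clearbody u. right. ring.
Qed.

Lemma INR_muln a b : INR (a * b)%N = INR a * INR b.
Proof. rewrite -multE; exact: mult_INR. Qed.

Lemma INR_expn a t : INR (a ^ t)%N = INR a ^ t.
Proof. elim: t => [|t IH] //=. by rewrite expnS INR_muln IH. Qed.

Lemma bin_real a t : INR ('C(a, t)) * INR t ^ t <= (3 * INR a) ^ t.
Proof.
have h1 := fact_lb t.
have h2 : INR ('C(a, t) * t`!) <= INR (a ^ t) by apply: le_INR; apply/leP; exact: bin_fact_le.
rewrite INR_muln INR_expn in h2.
have hc : 0 <= INR ('C(a, t)) by apply: pos_INR.
rewrite Rpow_mult_distr.
apply: Rle_trans (Rmult_le_compat_l _ _ _ hc h1) _.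
have h3 : 0 <= 3 ^ t by apply: pow_le; lra.
have -> : INR 'C(a, t) * (3 ^ t * INR t`!) = 3 ^ t * (INR 'C(a, t) * INR t`!) by ring.
exact: Rmult_le_compat_l _ _ _ h3 h2.
Qed.

Lemma binT_real j e P : (j <= e)%N -> (e <= P)%N ->
  INR ('C(P - j, e - j)) * INR P ^ j <= INR ('C(P, e)) * INR e ^ j.
Proof.
move=> h1 h2; have := binT h1 h2 => /leP /le_INR.
by rewrite !INR_muln !INR_expn.
Qed.

Lemma key (d : R) (m s t P e : nat) : 0 < d -> d < 1 -> 1 <= INR m -> (1 <= s)%N ->
  INR s <= sqrt (INR m) -> 4 * INR s / d <= INR t ->
  INR m * INR m <= INR P -> INR e <= Rpower (INR m) (3/2 - d/2) ->
  (t <= e)%N -> (e <= P)%N ->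
  INR ('C(s * s, t)) * INR ('C(P - t, e - t)) * INR m ^ (2 * s) <= INR ('C(P, e)).
Proof.
move=> d0 d1 m1 s1 hs ht hP he te eP.
set x := INR m in m1 hs hP he *.
have s1' : 1 <= INR s by apply: (le_INR 1); apply/leP.
have tpos : 0 < INR t.
  have : 0 < 4 * INR s / d by apply: Rdiv_lt_0_compat; lra.
  lra.
have Ppos : 0 < INR P by nra.
have xpos : 0 < x by lra.
set A := INR ('C(s * s, t)). set Bc := INR ('C(P - t, e - t)). set C0 := INR ('C(P, e)).
have hA := bin_real (s * s) t. rewrite -/A INR_muln in hA.
have hB := binT_real te eP. rewrite -/Bc -/C0 in hB.
have A0 : 0 <= A by apply: pos_INR.
have B0 : 0 <= Bc by apply: pos_INR.
have C00 : 0 <= C0 by apply: pos_INR.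
have e0 : 0 <= INR e by apply: pos_INR.
have sq : sqrt x = Rpower x (1/2).
  rewrite -Rpower_sqrt //. f_equal; lra.
have hsT : 3 * (INR s * INR s) <= INR s * INR t.
  have : 4 * INR s <= d * INR t.
    have := ht. rewrite /Rdiv => h.
    have : 4 * INR s * / d * d <= INR t * d by apply: Rmult_le_compat_r; lra.
    have -> : 4 * INR s * / d * d = 4 * INR s by field; lra.
    lra.
  nra.
have hx2 : Rpower x 2 = x * x.
  have -> : 2 = INR 2 by simpl; lra.
  rewrite Rpower_pow //; simpl; ring.
have hpow : Rpower x (1/2) * Rpower x (3/2 - d/2) = x * x * Rpower x (- (d/2)).
  rewrite -!Rpower_plus -hx2 -Rpower_plus. f_equal; lra.
have hq0 : 0 < Rpower x (- (d/2)) by apply: exp_pos.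
have hb : 3 * (INR s * INR s) * INR e <= Rpower x (- (d/2)) * (INR t * INR P).
  apply: Rle_trans (Rmult_le_compat_r _ _ _ e0 hsT) _.
  have h1 : INR s * INR t * INR e <= Rpower x (1/2) * INR t * Rpower x (3/2 - d/2).
    rewrite -sq. apply: Rmult_le_compat; try nra.
  apply: Rle_trans h1 _.
  have -> : Rpower x (1/2) * INR t * Rpower x (3/2 - d/2) = INR t * (x * x * Rpower x (- (d/2))).
    rewrite -hpow; ring.
  have hh := Rmult_le_compat_l _ _ _ (Rlt_le _ _ (Rmult_lt_0_compat _ _ tpos hq0)) hP.
  have -> : INR t * (x * x * Rpower x (- (d / 2))) = INR t * Rpower x (- (d / 2)) * (x * x) by ring.
  have -> : Rpower x (- (d / 2)) * (INR t * INR P) = INR t * Rpower x (- (d / 2)) * INR P by ring.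
  exact: hh.
set b := 3 * (INR s * INR s) * INR e / (INR t * INR P).
have b0 : 0 <= b.
  rewrite /b. apply: Rmult_le_pos; last by apply: Rlt_le; apply: Rinv_0_lt_compat; nra.
  nra.
have bq : b <= Rpower x (- (d/2)).
  rewrite /b /Rdiv. apply: (Rmult_le_reg_r (INR t * INR P)); first nra.
  rewrite Rmult_assoc Rinv_l; last by nra.
  lra.
have hbt : b ^ t * x ^ (2 * s) <= 1.
  have h1 : b ^ t <= Rpower x (- (d / 2)) ^ t by apply: pow_incr; lra.
  have h2 : Rpower x (- (d / 2)) ^ t = Rpower x (- (d/2) * INR t).
    by rewrite -Rpower_pow // Rpower_mult.
  have h3 : Rpower x (- (d/2) * INR t) <= Rpower x (- INR (2 * s)).
    apply: Rle_Rpower => //. rewrite INR_muln /=.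
    have : 4 * INR s <= d * INR t.
      have := ht. rewrite /Rdiv => h.
      have : 4 * INR s * / d * d <= INR t * d by apply: Rmult_le_compat_r; lra.
      have -> : 4 * INR s * / d * d = 4 * INR s by field; lra.
      lra.
    lra.
  have h4 : Rpower x (- INR (2 * s)) * x ^ (2 * s) = 1.
    rewrite Rpower_Ropp Rpower_pow //. field. apply: pow_nonzero; lra.
  have hx0 : 0 <= x ^ (2 * s) by apply: pow_le; lra.
  rewrite -h4. apply: Rmult_le_compat_r => //. lra.
have ebt : (3 * (INR s * INR s) * INR e) ^ t = b ^ t * (INR t * INR P) ^ t.
  rewrite -Rpow_mult_distr /b. f_equal. field. nra.
have tp0 : 0 < (INR t * INR P) ^ t by apply: pow_lt; nra.
apply: (Rmult_le_reg_r ((INR t * INR P) ^ t)) => //.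
have step1 : A * Bc * x ^ (2 * s) * (INR t * INR P) ^ t =
  (A * INR t ^ t) * (Bc * INR P ^ t) * x ^ (2 * s).
  rewrite Rpow_mult_distr; ring.
rewrite step1.
have hx0 : 0 <= x ^ (2 * s) by apply: pow_le; lra.
have hAt : 0 <= A * INR t ^ t by apply: Rmult_le_pos => //; apply: pow_le; lra.
apply: Rle_trans (Rmult_le_compat_r _ _ _ hx0 (Rmult_le_compat _ _ _ _ hAt _ hA hB)) _.
  apply: Rmult_le_pos => //; apply: pow_le; lra.
have -> : (3 * (INR s * INR s)) ^ t * (C0 * INR e ^ t) * x ^ (2 * s) =
   C0 * ((3 * (INR s * INR s) * INR e) ^ t * x ^ (2 * s)).
  rewrite !Rpow_mult_distr; ring.
rewrite ebt.
have -> : C0 * (b ^ t * (INR t * INR P) ^ t * x ^ (2 * s)) = C0 * (INR t * INR P) ^ t * (b ^ t * x ^ (2 * s)) by ring.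
have hCP : 0 <= C0 * (INR t * INR P) ^ t by nra.
apply: Rle_trans (Rmult_le_compat_l _ _ _ hCP hbt) _. lra.
Qed.

Lemma INR_Zto_nat z : (0 <= z)%Z -> INR (Z.to_nat z) = IZR z.
Proof. move=> h; rewrite INR_IZR_INZ Z2Nat.id //. Qed.

Lemma floor_ex x : 0 <= x -> exists k : nat, is_floor k x.
Proof.
move=> hx; have [h1 h2] := archimed x.
have hz : (0 <= up x - 1)%Z.
  have : (0 < up x)%Z by apply: lt_IZR; lra.
  lia.
exists (Z.to_nat (up x - 1)); rewrite /is_floor INR_Zto_nat // minus_IZR; lra.
Qed.

Lemma ceil_ex x : 0 <= x -> exists k : nat, is_ceil k x.
Proof.
move=> hx; have [h1 h2] := archimed (- x).
have hz : (0 <= 1 - up (- x))%Z.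
  have : (up (- x) <= 1)%Z by apply: le_IZR; lra.
  lia.
exists (Z.to_nat (1 - up (- x))); rewrite /is_ceil INR_Zto_nat // minus_IZR; lra.
Qed.

Lemma nat_above x : exists N : nat, x <= INR N.
Proof.
have [k [h1 h2]] := ceil_ex (Rabs_pos x). exists k.
have := Rle_abs x. lra.
Qed.

Lemma ceil_le (k d : nat) (c : R) : is_ceil k c -> c <= INR d -> (k <= d)%N.
Proof.
move=> [h1 h2] h3. have : INR k < INR d + 1 by lra.
rewrite -S_INR => /INR_lt /ltP. lia.
Qed.

Lemma le_floor (k d : nat) (x : R) : is_floor k x -> INR d <= x -> (d <= k)%N.
Proof.
move=> [h1 h2] h3. have : INR d < INR k + 1 by lra.
rewrite -S_INR => /INR_lt /ltP. lia.
Qed.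

Lemma bern (a : R) (k : nat) : 0 <= a -> INR k * a <= 1 -> (1 + a) ^ k * (1 - INR k * a) <= 1.
Proof.
move=> ha; elim: k => [|k IH] hk; first by simpl; lra.
rewrite S_INR in hk *.
have hk' : INR k * a <= 1 by have := pos_INR k; nra.
have := IH hk'. move=> h.
have hp : 0 <= (1 + a) ^ k by apply: pow_le; lra.
have -> : (1 + a) ^ k.+1 * (1 - (INR k + 1) * a) =
   (1 + a) ^ k * (1 - INR k * a) - (1 + a) ^ k * (INR k * a * a + a * a) by simpl; ring.
have : 0 <= (1 + a) ^ k * (INR k * a * a + a * a).
  apply: Rmult_le_pos => //. have := pos_INR k; nra.
lra.
Qed.

Lemma Rpower_ge1 x y : 1 <= x -> 0 <= y -> 1 <= Rpower x y.
Proof.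
move=> hx hy. rewrite -(Rpower_O x); last lra.
by apply: Rle_Rpower.
Qed.

Lemma Rpower_big (b r y : R) : 0 < b -> 0 < r -> Rpower b (/ r) <= y -> b <= Rpower y r.
Proof.
move=> hb hr hy.
have h0 : 0 < Rpower b (/ r) by apply: exp_pos.
have -> : b = Rpower (Rpower b (/ r)) r.
  rewrite Rpower_mult. have -> : / r * r = 1 by field; lra. by rewrite Rpower_1.
apply: Rle_Rpower_l; lra.
Qed.

Lemma sqrt_Rpower x : 0 < x -> Rpower x (1/2) = sqrt x.
Proof. move=> h; rewrite -Rpower_sqrt //; f_equal; lra. Qed.

Lemma asym (d : R) : 0 < d -> d < 1 -> exists X0 : R, forall x : R, X0 <= x ->
  16 <= x / 2 /\
  Rpower (x / 2) (3/2 - d/2) >= Rpower x (3/2 - d) + 3 /\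
  sqrt x - 1 >= 2 + 2 * Rpower x (1/2 - d).
Proof.
move=> d0 d1.
set A := Rpower 4 (/ (d / 2)). set B := Rpower 8 (/ d).
have A0 : 0 < A by apply: exp_pos.
have B0 : 0 < B by apply: exp_pos.
exists (32 + 2 * A + B) => x hx.
have x0 : 0 < x by lra.
set y := x / 2.
have y16 : 16 <= y by rewrite /y; lra.
have y0 : 0 < y by lra.
split => //.
have sq16 : 4 <= sqrt y.
  have -> : 4 = sqrt 16 by rewrite -(sqrt_square 4); [f_equal; lra | lra].
  apply: sqrt_le_1_alt; lra.
split.
- set a := 3/2 - d.
  have hxy : x = 2 * y by rewrite /y; field.
  have e1 : Rpower x a = Rpower 2 a * Rpower y a by rewrite hxy -Rpower_mult_distr //; lra.
  have e2 : Rpower y (3/2 - d/2) = Rpower y (d/2) * Rpower y a by rewrite -Rpower_plus /a; f_equal; lra.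
  have h2a : Rpower 2 a <= 3.
    apply: Rle_trans (_ : Rpower 2 (1 + 1/2) <= 3).
      apply: Rle_Rpower; rewrite /a; lra.
    rewrite Rpower_plus Rpower_1; last lra. rewrite sqrt_Rpower; last lra.
    have : sqrt 2 <= 3/2.
      rewrite -(sqrt_square (3/2)); last lra. apply: sqrt_le_1_alt; lra.
    lra.
  have hya : 4 <= Rpower y a.
    apply: Rle_trans sq16 _. rewrite -sqrt_Rpower //. apply: Rle_Rpower; rewrite /a; lra.
  have hyd : 4 <= Rpower y (d/2).
    apply: Rpower_big; try lra. rewrite -/A /y; lra.
  have h2p : 0 < Rpower 2 a by apply: exp_pos.
  rewrite e1 e2. nra.
- have e1 : Rpower x (1/2 - d) = sqrt x * / Rpower x d.
    rewrite /Rminus Rpower_plus Rpower_Ropp sqrt_Rpower //.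
  have hxd : 8 <= Rpower x d by apply: Rpower_big; try lra; rewrite -/B; lra.
  have sx : 4 <= sqrt x.
    apply: Rle_trans sq16 _. apply: sqrt_le_1_alt; rewrite /y; lra.
  rewrite e1.
  have : sqrt x * / Rpower x d <= sqrt x / 8.
    rewrite /Rdiv. apply: Rmult_le_compat_l; first lra.
    apply: Rinv_le_contravar; lra.
  lra.
Qed.
Close Scope R_scope.
Section G.
Variables (n m : nat).
Hypothesis hn : (m + m = n)%N.
Definition Lset := [set x : 'I_n | (x < m)%N].
Definition Rset := [set x : 'I_n | (m <= x)%N].
Definition pr (p : 'I_n * 'I_n) : {set 'I_n} := [set p.1; p.2].
Definition Pairs := pr @: setX Lset Rset.
Definition Cand e := [set E : sgraph n | (E \subset Pairs) && (#|E| == e)].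
Definition PairsIn (S : {set 'I_n}) := [set p in Pairs | p \subset S].
Definition Ext e (T : sgraph n) := [set E in Cand e | T \subset E].
Definition Tset t S := [set T : sgraph n | (T \subset PairsIn S) && (#|T| == t)].

Lemma card_Cand e : #|Cand e| = 'C(#|Pairs|, e).
Proof. exact: cards_draws. Qed.

Lemma in_Pairs X : X \in Pairs -> exists x y : 'I_n, X = [set x; y] /\ (x < m)%N /\ (m <= y)%N.
Proof.
case/imsetP => -[x y]; rewrite inE /= !inE => /andP[hx hy] ->.
by exists x, y.
Qed.

Lemma set2_mem (x y a : 'I_n) : a \in [set x; y] -> a = x \/ a = y.
Proof. by rewrite !inE => /orP[/eqP|/eqP]; [left|right]. Qed.

Lemma pairs_side (a b : 'I_n) : [set a; b] \in Pairs -> (a < m)%N = (m <= b)%N.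
Proof.
case/in_Pairs => x [y [e [hx hy]]].
have ha : a \in [set x; y] by rewrite -e !inE eqxx.
have hb : b \in [set x; y] by rewrite -e !inE eqxx orbT.
have hx' : x \in [set a; b] by rewrite e !inE eqxx.
have hy' : y \in [set a; b] by rewrite e !inE eqxx orbT.
case: (set2_mem ha) => /(congr1 (@nat_of_ord n)) ea; case: (set2_mem hb) => /(congr1 (@nat_of_ord n)) eb;
  case: (set2_mem hy') => /(congr1 (@nat_of_ord n)) ey; case: (set2_mem hx') => /(congr1 (@nat_of_ord n)) ex; apply/idP/idP => ?; lia.
Qed.



Lemma Lset_big : (m <= #|Lset|)%N.
Proof.
have f_ok (i : 'I_m) : (i < n)%N by have := ltn_ord i; lia.
pose f (i : 'I_m) : 'I_n := Ordinal (f_ok i).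
have inj : injective f by move=> i j /(congr1 val) /= /val_inj.
have : #|f @: [set: 'I_m]| = m by rewrite card_imset // cardsT card_ord.
move=> <-. apply: subset_leq_card. apply/subsetP => z /imsetP [i _ ->].
by rewrite inE /=.
Qed.

Lemma Rset_big : (m <= #|Rset|)%N.
Proof.
have f_ok (i : 'I_m) : (m + i < n)%N by have := ltn_ord i; lia.
pose f (i : 'I_m) : 'I_n := Ordinal (f_ok i).
have inj : injective f by move=> i j /(congr1 val) /= h; apply: val_inj => /=; lia.
have : #|f @: [set: 'I_m]| = m by rewrite card_imset // cardsT card_ord.
move=> <-. apply: subset_leq_card. apply/subsetP => z /imsetP [i _ ->].
by rewrite inE /=; lia.
Qed.

Lemma Pairs_big : (m * m <= #|Pairs|)%N.
Proof.
rewrite /Pairs card_in_imset; last first.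
  move=> [x1 y1] [x2 y2]; rewrite !inE /= => /andP[h1 h2] /andP[h3 h4] e.
  rewrite /pr /= in e.
  have a1 : x1 \in [set x2; y2] by rewrite -e !inE eqxx.
  have a2 : y1 \in [set x2; y2] by rewrite -e !inE eqxx orbT.
  case: (set2_mem a1) => ex; last by subst; lia.
  case: (set2_mem a2) => ey; first by subst; lia.
  by subst.
rewrite cardsX. apply: leq_mul; [exact: Lset_big | exact: Rset_big].
Qed.

Lemma PairsIn_card S : (#|PairsIn S| <= #|S| * #|S|)%N.
Proof.
rewrite -cardsX. apply: leq_trans (leq_imset_card pr _).
apply: subset_leq_card. apply/subsetP => X; rewrite inE => /andP[/in_Pairs [x [y [-> _]]] hS].
apply/imsetP; exists (x, y) => //.
rewrite inE /=. apply/andP; split; apply: (subsetP hS); rewrite !inE eqxx ?orbT //.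
Qed.

Lemma Tset_card t S : (#|Tset t S| <= 'C(#|S| * #|S|, t))%N.
Proof.
rewrite /Tset cards_draws. apply: leq_bin2l. exact: PairsIn_card.
Qed.

Lemma Ext_card e (T : sgraph n) : T \subset Pairs -> (#|T| <= e)%N ->
  (#|Ext e T| <= 'C(#|Pairs| - #|T|, e - #|T|))%N.
Proof.
move=> TP te.
have hc : #|Pairs :\: T| = (#|Pairs| - #|T|)%N by rewrite cardsD (setIidPr TP).
rewrite -hc -cards_draws.
have : #|(fun E => E :\: T) @: Ext e T| = #|Ext e T|.
  apply: card_in_imset => E1 E2; rewrite !inE => /andP[_ h1] /andP[_ h2] heq.
  apply/setP => z. move/setP: heq => /(_ z); rewrite !inE.
  case zT : (z \in T).
    by rewrite (subsetP h1 _ zT) (subsetP h2 _ zT).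
  by [].
move=> <-. apply: subset_leq_card. apply/subsetP => X /imsetP [E]; rewrite !inE.
move=> /andP[/andP[EP /eqP cE] TE] ->.
apply/andP; split; first by apply: setSD.
by rewrite cardsD (setIidPr TE) cE.
Qed.

Lemma Ext_empty e (T : sgraph n) : (e < #|T|)%N -> Ext e T = set0.
Proof.
move=> h; apply/setP => E; rewrite !inE.
apply/negP => /andP[/andP[_ /eqP cE] TE].
have := subset_leq_card TE; lia.
Qed.


Lemma side_sum (b : bool) (E : sgraph n) (S : {set 'I_n}) : E \subset Pairs ->
  (\sum_(v in S | (v < m)%N == b :> bool) deg_in E S v <= #|[set p in E | p \subset S]|)%N.
Proof.
move=> EP.
set D := [set p : 'I_n * 'I_n | ((p.1 \in S) && ((p.1 < m)%N == b)) && ((p.2 \in S) && ([set p.2; p.1] \in E))].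
have -> : (\sum_(v in S | (v < m)%N == b :> bool) deg_in E S v = #|D|)%N.
  transitivity (\sum_(v | (v \in S) && ((v < m)%N == b)) \sum_(u | (u \in S) && ([set u; v] \in E)) 1)%N.
    apply: eq_bigr => v _; by rewrite sum1dep_card.
  rewrite (pair_big_dep (fun v => (v \in S) && ((v < m)%N == b)) (fun v u => (u \in S) && ([set u; v] \in E)) (fun _ _ => 1%N)).
  rewrite sum1dep_card. apply: eq_card => p. by rewrite !inE.
have sd (x y : 'I_n) : [set x; y] \in E -> (x < m)%N = ~~ (y < m)%N.
  move=> h; rewrite (pairs_side (subsetP EP _ h)). by rewrite -leqNgt.
rewrite -(@card_in_imset _ _ (fun p => [set p.2; p.1])); last first.
  move=> [p1 p2] [q1 q2]; rewrite !inE /= => /andP[/andP[_ hp1] /andP[_ hp]] /andP[/andP[_ hq1] /andP[_ hq]] e.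
  have sp := sd _ _ hp. have sq := sd _ _ hq.
  have e1 : (p1 < m)%N = (q1 < m)%N by move/eqP: hp1 => ->; move/eqP: hq1 => ->.
  have a1 : p1 \in [set q2; q1] by rewrite -e !inE eqxx orbT.
  have a2 : p2 \in [set q2; q1] by rewrite -e !inE eqxx.
  case: (set2_mem a1) => x1.
    by exfalso; move: e1 sq; rewrite x1 => ->; case: (q1 < m)%N.
  case: (set2_mem a2) => x2; first by rewrite x1 x2.
  by exfalso; move: sp; rewrite x2 -x1; case: (p1 < m)%N.
apply: subset_leq_card. apply/subsetP => X /imsetP [[p1 p2]]; rewrite !inE /=.
move=> /andP[/andP[h1 _] /andP[h2 h3]] ->. rewrite h3 /=.
apply/subsetP => z; rewrite !inE => /orP[/eqP->|/eqP->] //.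
Qed.

Lemma handshake (E : sgraph n) (S : {set 'I_n}) : E \subset Pairs ->
  (\sum_(v in S) deg_in E S v <= 2 * #|[set p in E | p \subset S]|)%N.
Proof.
move=> EP. rewrite (bigID (fun v : 'I_n => (v < m)%N == true)) /=.
have h1 := side_sum true S EP. have h2 := side_sum false S EP.
have -> : (\sum_(i in S | ~~ ((i < m)%N == true)) deg_in E S i = \sum_(v in S | (v < m)%N == false) deg_in E S v)%N.
  by apply: eq_bigl => v; case: (v < m)%N; rewrite ?andbT ?andbF.
rewrite mul2n -addnn; exact: leq_add h1 h2.
Qed.

Lemma witness (E : sgraph n) (S : {set 'I_n}) d0 : E \subset Pairs ->
  (forall v, v \in S -> (d0 <= deg_in E S v)%N) ->
  exists2 T, T \in Tset ((#|S| * d0 + 1) %/ 2) S & T \subset E.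
Proof.
move=> EP hd.
set ES := [set p in E | p \subset S].
have h1 := handshake S EP.
have h2 : (#|S| * d0 <= \sum_(v in S) deg_in E S v)%N.
  rewrite -sum_nat_const. apply: leq_sum => v; exact: hd.
set t := ((#|S| * d0 + 1) %/ 2)%N.
have ht : (t <= #|ES|)%N.
  rewrite /t; move: h1 h2; set X := (#|S| * d0)%N; set Y := (\sum_(v in S) deg_in E S v)%N; move=> h1 h2.
  have := leq_divM (X + 1) 2. rewrite -/ES in h1. lia.
have : (0 < #|[set T : sgraph n | (T \subset ES) && (#|T| == t)]|)%N.
  by rewrite cards_draws bin_gt0.
case/card_gt0P => T; rewrite inE => /andP[TE /eqP cT].
exists T.
  rewrite inE cT eqxx andbT. apply: (subset_trans TE). apply/subsetP => p.
  rewrite !inE => /andP[pE pS]. by rewrite (subsetP EP _ pE).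
apply: (subset_trans TE). apply/subsetP => p; rewrite inE => /andP[] //.
Qed.

End G.
Close Scope R_scope.
From Stdlib Require Import Classical ClassicalEpsilon.
Definition asb (P : Prop) : bool := if excluded_middle_informative P then true else false.
Lemma asbP (P : Prop) : reflect P (asb P).
Proof. rewrite /asb; case: excluded_middle_informative => h; by constructor. Qed.

Lemma card_bigcup_le (T I : finType) (A : {pred I}) (F : I -> {set T}) :
  (#|\bigcup_(i in A) F i| <= \sum_(i in A) #|F i|)%N.
Proof.
apply: (big_ind2 (fun (X : {set T}) k => #|X| <= k)%N) => //.
- by rewrite cards0.
- move=> X1 k1 X2 k2 h1 h2. apply: leq_trans (leq_card_setU X1 X2) _. exact: leq_add.
Qed.

Section H.
Variables (n m : nat).
Hypothesis hn : (m + m = n)%N.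
Local Open Scope R_scope.

Definition Sset := [set S : {set 'I_n} | (0 < #|S|)%N && asb (INR #|S| <= sqrt (INR m))].
Definition badP d0 (E : sgraph n) := exists S, S \in Sset /\ forall v, v \in S -> (d0 <= deg_in E S v)%N.
Definition Bad e d0 := [set E in Cand n m e | asb (badP d0 E)].
Definition tf d0 s := ((s * d0 + 1) %/ 2)%N.

Lemma bad_sub e d0 : Bad e d0 \subset \bigcup_(S in Sset) \bigcup_(T in Tset m (tf d0 #|S|) S) Ext m e T.
Proof.
apply/subsetP => E; rewrite inE => /andP[hc /asbP [S [hS hd]]].
have EP : E \subset Pairs n m by move: hc; rewrite inE => /andP[].
have [T hT TE] := witness hn EP hd.
apply/bigcupP; exists S => //. apply/bigcupP; exists T => //.
by rewrite inE hc TE.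
Qed.

Lemma perS (d : R) e d0 S : (0 < d) -> (d < 1) -> (8 / d <= INR d0) -> (1 <= INR m) ->
  (INR e <= Rpower (INR m) (3/2 - d/2)) -> (e <= #|Pairs n m|)%N -> S \in Sset ->
  ((\sum_(T in Tset m (tf d0 #|S|) S) #|Ext m e T|) * (m * m) ^ #|S| <= 'C(#|Pairs n m|, e))%N.
Proof.
move=> d0p d1 hd0 m1 he eP; rewrite inE => /andP[s1 /asbP hs].
set t := tf d0 #|S|.
case: (leqP t e) => te; last first.
  rewrite big1 // => T hT. rewrite (Ext_empty hn) ?cards0 //.
  by move: hT; rewrite inE => /andP[_ /eqP ->].
apply: (@leq_trans ('C(#|S| * #|S|, t) * 'C(#|Pairs n m| - t, e - t) * (m * m) ^ #|S|)).
  rewrite leq_mul2r; apply/orP; right.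
  apply: (@leq_trans (\sum_(T in Tset m t S) 'C(#|Pairs n m| - t, e - t))).
    apply: leq_sum => T; rewrite inE => /andP[TP /eqP cT].
    have TP' : T \subset Pairs n m.
      apply: (subset_trans TP). apply/subsetP => p; rewrite inE => /andP[] //.
    have te' : (#|T| <= e)%N by rewrite cT.
    by have := Ext_card TP' te'; rewrite cT.
  rewrite sum_nat_const. rewrite leq_mul2r; apply/orP; right. exact: Tset_card.
apply/leP; apply: INR_le.
rewrite !INR_muln INR_expn INR_muln -pow_sqr.
have ht : (4 * INR #|S| / d <= INR t).
  have h2 : (#|S| * d0 <= 2 * t)%N by rewrite /t /tf; have := leq_divM (#|S| * d0 + 1) 2; lia.
  move/leP/le_INR: h2; rewrite !INR_muln => h2.
  have hs0 : (0 <= INR #|S|) by apply: pos_INR.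
  have : (INR #|S| * (8 / d) <= INR #|S| * INR d0) by apply: Rmult_le_compat_l.
  have -> : (4 * INR #|S| / d = INR #|S| * (8 / d) / 2) by field; lra.
  simpl (INR 2) in h2. lra.
have hP : (INR m * INR m <= INR #|Pairs n m|).
  rewrite -INR_muln; apply: le_INR; apply/leP; exact: (Pairs_big hn).
have := key d0p d1 m1 s1 hs ht hP he te eP.
exact.
Qed.


Lemma sum_sets (c : nat) : (\sum_(S : {set 'I_n}) c ^ (n - #|S|) = (1 + c) ^ n)%N.
Proof.
have := @bigA_distr nat 0%N 1%N muln addn _ (fun _ : 'I_n => 1%N) (fun _ => c).
rewrite /= prod_nat_const cardT size_enum_ord => ->.
apply: eq_bigr => J _.
rewrite (bigID (fun i => i \in J)) /= big1; last by move=> i ->.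
rewrite mul1n.
rewrite (@eq_bigr nat 1%N muln _ _ _ _ (fun _ : 'I_n => c)); last by move=> i /negbTE ->.
rewrite prod_nat_const. congr (expn c _).
have := cardC (mem J). rewrite cardT size_enum_ord. 
have -> : #|[predC mem J]| = #|[pred i | ~~ (i \in J)]| by apply: eq_card.
move=> h. have := addKn #|J| #|[pred i | i \notin J]|. rewrite -[X in (X - _)%N = _ -> _]/(#|mem J| + #|[pred i | i \notin J]|)%N h. done.
Qed.

Lemma bad_count (d : R) e d0 : (0 < d) -> (d < 1) -> (8 / d <= INR d0) -> (1 <= INR m) ->
  (INR e <= Rpower (INR m) (3/2 - d/2)) -> (e <= #|Pairs n m|)%N ->
  (#|Bad e d0| * (m * m) ^ n + 'C(#|Pairs n m|, e) * (m * m) ^ n <= 'C(#|Pairs n m|, e) * (1 + m * m) ^ n)%N.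
Proof.
move=> d0p d1 hd0 m1 he eP.
set C := 'C(#|Pairs n m|, e). set c := (m * m)%N.
have h1 : (#|Bad e d0| <= \sum_(S in Sset) \sum_(T in Tset m (tf d0 #|S|) S) #|Ext m e T|)%N.
  apply: leq_trans (subset_leq_card (bad_sub e d0)) _.
  apply: leq_trans (card_bigcup_le _ _) _.
  apply: leq_sum => S _. exact: card_bigcup_le.
apply: (@leq_trans ((\sum_(S in Sset) \sum_(T in Tset m (tf d0 #|S|) S) #|Ext m e T|) * c ^ n + C * c ^ n)%N).
  by rewrite leq_add2r leq_mul2r h1 orbT.
rewrite -sum_sets big_distrr /= [X in (_ <= X)%N](bigD1 set0) //= cards0 subn0 addnC leq_add2l big_distrl /=.
rewrite (big_mkcond (fun S => S \in Sset)) (big_mkcond (fun S => S != set0)) /=.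
apply: leq_sum => S _.
case hS : (S \in Sset); last by [].
have Sn : S != set0.
  move: hS; rewrite inE => /andP[h _]. apply/eqP => e0; move: h; by rewrite e0 cards0.
rewrite Sn.
have hsn : (#|S| <= n)%N by have := max_card (mem S); rewrite cardT size_enum_ord.
have -> : (c ^ n = c ^ #|S| * c ^ (n - #|S|))%N by rewrite -expnD subnKC.
rewrite mulnA leq_mul2r. apply/orP; right.
exact: (perS d0p d1 hd0 m1 he eP hS).
Qed.
End H.
Section U.
Variables (n k : nat).

Definition pb N (U : sgraph N) (pi : {ffun 'I_n -> 'I_N}) : sgraph n :=
  [set X : {set 'I_n} | (#|X| == 2) && (pi @: X \in U)].
Definition fam N (U : sgraph N) := [set pb U pi | pi in [set: {ffun 'I_n -> 'I_N}]].
Definition two N := [set X : {set 'I_N} | #|X| == 2].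
Definition covU N (U : sgraph N) := [set f : {ffun 'I_k -> sgraph n} | [forall i, f i \in fam U]].
Definition Cov B0 := \bigcup_(N < B0.+1) \bigcup_(U in powerset (two N)) covU U.

Lemma imset2' (T1 T2 : finType) (f : T1 -> T2) a b : f @: [set a; b] = [set f a; f b].
Proof. by rewrite imsetU !imset_set1. Qed.

Lemma induced_fam N (F : sgraph n) (U : sgraph N) : is_simple F -> induced_sub F U -> F \in fam U.
Proof.
move=> /forallP sF [pi [ipi hpi]].
apply/imsetP; exists (finfun pi); first by rewrite inE.
apply/setP => X; rewrite inE.
case: (boolP (#|X| == 2)) => h2 /=.
  case/cards2P: h2 => x [y [_ ->]]. by rewrite imset2' !ffunE hpi.
apply/negP => XF. have := sF X; rewrite XF /= => h. by rewrite h in h2.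
Qed.

Lemma card_fam N (U : sgraph N) : (#|fam U| <= N ^ n)%N.
Proof.
apply: leq_trans (leq_imset_card _ _) _. by rewrite cardsT card_ffun !card_ord.
Qed.

Lemma card_covU N (U : sgraph N) : (#|covU U| <= (N ^ n) ^ k)%N.
Proof.
have -> : #|covU U| = #|ffun_on (fam U) : pred {ffun 'I_k -> sgraph n}|.
  apply: eq_card => f; rewrite inE. apply/forallP/ffun_onP => h x; exact: h.
rewrite card_ffun_on card_ord. apply: expn_mono. exact: card_fam.
Qed.

Lemma card_two N : (#|two N| <= N * N)%N.
Proof.
rewrite /two card_draws card_ord.
have h := bin_fact_le N 2. have e2 : 2`! = 2 by []. rewrite e2 (expnS N 1) expn1 in h. lia.
Qed.

Lemma card_Cov B0 : (#|Cov B0| <= B0.+1 * (2 ^ (B0 * B0) * (B0 ^ n) ^ k))%N.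
Proof.
apply: leq_trans (card_bigcup_le _ _) _.
rewrite -[X in (_ <= X * _)%N](card_ord B0.+1) -sum_nat_const. apply: leq_sum => N _.
apply: leq_trans (card_bigcup_le _ _) _.
apply: leq_trans (_ : (\sum_(U in powerset (two N)) (B0 ^ n) ^ k <= _)%N).
  apply: leq_sum => U _. apply: leq_trans (card_covU U) _.
  apply: expn_mono; apply: expn_mono. have := ltn_ord N; lia.
rewrite sum_nat_const card_powerset leq_mul2r; apply/orP; right.
apply: leq_pexp2l => //. apply: leq_trans (card_two N) _. have := ltn_ord N. nia.
Qed.

End U.
Local Open Scope R_scope.

Lemma INR_addn a b : INR (a + b)%N = (INR a + INR b).
Proof. rewrite -plusE; exact: plus_INR. Qed.

Lemma good_of n m e d0 (eps c : R) (E : sgraph n) : (m + m = n)%N ->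
  is_floor e (Rpower (INR n / 2) (2 - eps)) -> is_ceil d0 c ->
  E \in Cand n m e -> E \notin Bad n m e d0 -> good_graph eps (1/2) c E.
Proof.
move=> hn hfl hce; rewrite inE => /andP[EP /eqP cE] nB.
have hm : n./2 = m by rewrite -hn addnn doubleK.
have hnm : (INR n / 2 = INR m) by rewrite -hn INR_addn; field.
split.
  apply/forallP => X; apply/implyP => XE.
  have [x [y [-> [hx hy]]]] := in_Pairs (subsetP EP _ XE).
  rewrite cards2. have : x != y by apply/negP => /eqP h; rewrite h in hx; lia.
  by move=> ->.
split.
  move=> X XE. have [x [y [-> [hx hy]]]] := in_Pairs (subsetP EP _ XE).
  exists x, y; split => //. rewrite hm. by apply/andP.
split; first by rewrite cE.
move=> S hS hsz.
apply: NNPP => hno.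
have hall : forall v, v \in S -> (d0 <= deg_in E S v)%N.
  move=> v vS. apply: (ceil_le hce). apply: Rnot_lt_le => hlt. apply: hno. by exists v.
move/negP: nB; apply. rewrite inE.
have -> : E \in Cand n m e by rewrite inE EP cE eqxx.
apply/asbP. exists S; split => //.
rewrite inE hS /=. apply/asbP.
rewrite hnm sqrt_Rpower in hsz => //. 
apply: lt_0_INR. have h : (#|S| <= n)%N by rewrite -[X in (_ <= X)%N]card_ord; exact: max_card. apply/ltP. lia.
Qed.

Lemma sqrt_nat_bounds n : INR (Nat.sqrt n) <= sqrt (INR n) /\ sqrt (INR n) - 1 < INR (Nat.sqrt n).
Proof.
have [h1 h2] := Nat.sqrt_spec n (Nat.le_0_l n).
set f := Nat.sqrt n in h1 h2 *.
have hf0 : 0 <= INR f by apply: pos_INR.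
split.
  rewrite -(sqrt_square (INR f)) //. apply: sqrt_le_1_alt.
  rewrite -mult_INR. apply: le_INR. exact: h1.
have : sqrt (INR n) < INR f + 1.
  rewrite -(sqrt_square (INR f + 1)); last lra.
  apply: sqrt_lt_1_alt; split; first by apply: pos_INR.
  have -> : (INR f + 1) * (INR f + 1) = INR (S f * S f) by rewrite mult_INR S_INR.
  apply: lt_INR. exact: h2.
lra.
Qed.

Lemma Rpower2_nat (t : nat) : Rpower 2 (INR t) = INR (2 ^ t)%N.
Proof. rewrite Rpower_pow; last lra. rewrite INR_expn. by []. Qed.

Lemma bern_nat m n : (16 <= INR m) -> (m + m = n)%N -> (2 * (1 + m * m) ^ n <= 3 * (m * m) ^ n)%N.
Proof.
move=> h16 hn. apply/leP; apply: INR_le.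
rewrite !INR_muln !INR_expn INR_addn !INR_muln.
set x := INR m in h16 *. have x0 : 0 < x by lra.
set a := / (x * x).
have a0 : 0 <= a by apply: Rlt_le; apply: Rinv_0_lt_compat; nra.
have hnx : INR n = 2 * x by rewrite -hn INR_addn /x; ring.
have hna : INR n * a = 2 / x by rewrite hnx /a; field; lra.
have hna' : INR n * a <= 1 / 8.
  rewrite hna. apply: (Rmult_le_reg_r x) => //. rewrite /Rdiv Rmult_assoc Rinv_l; lra.
have hb := @bern a n a0 ltac:(lra).
have e1 : 1 + x * x = (x * x) * (1 + a) by rewrite /a; field; lra.
rewrite e1 Rpow_mult_distr.
have hp : 0 < (x * x) ^ n by apply: pow_lt; nra.
have hq : 0 <= (1 + a) ^ n by apply: pow_le; lra.
have : (1 + a) ^ n <= 3 / 2 by nra.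
simpl (INR 2); simpl (INR 3). nra.
Qed.

Unset Implicit Arguments.
Theorem mainTheorem5 (delta : R) :
  0 < delta -> delta < 1 ->
  let eps := 1/2 + delta/2 in
  let eps' := 1/2 in
  let c := 8/delta in
  exists n0 : nat, forall n : nat, (n0 <= n)%N -> ~~ odd n ->
    exists M : {set sgraph n},
      (forall E, E \in M -> good_graph eps eps' c E) /\
      (forall k : nat, is_ceil k (Rpower 2 (sqrt (INR n))) -> (#|M| <= k)%N) /\
      ~ (exists (N : nat) (U : sgraph N),
           is_simple U /\
           INR N <= Rpower 2 (Rpower (INR n) (1/2 - delta)) /\
           forall E, E \in M -> induced_sub E U).
Proof.
move=> d0p d1 eps eps' c.
have [X0 hX0] := asym d0p d1.
have [N0 hN0] := nat_above X0.
exists N0 => n hn0 hodd.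
set m := n./2.
have hn : (m + m = n)%N.
  rewrite addnn /m; have := odd_double_half n; rewrite (negbTE hodd) add0n. done.
have hx : X0 <= INR n by apply: Rle_trans hN0 (le_INR _ _ (elimT leP hn0)).
have [hm16 [hii hiii]] := hX0 _ hx.
have hnm : INR n / 2 = INR m by rewrite -hn INR_addn; field.
rewrite hnm in hm16 hii.
have m1 : 1 <= INR m by lra.
have he2 : 2 - eps = 3/2 - delta/2 by rewrite /eps; field.
have [e hfl] := @floor_ex (Rpower (INR n / 2) (2 - eps)) (Rlt_le _ _ (exp_pos _)).
have c0 : 0 <= c by rewrite /c; apply: Rlt_le; apply: Rdiv_lt_0_compat; lra.
have [d0 hce] := ceil_ex c0.
set y := Rpower (INR n) (1/2 - delta).
set B := Rpower 2 y.
have B1 : 1 <= B by apply: Rpower_ge1; [lra | apply: Rlt_le; apply: exp_pos].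
have [B0 hB0] := @floor_ex B ltac:(lra).
set f := Nat.sqrt n.
set k := (2 ^ f)%N.
have he : INR e <= Rpower (INR m) (3/2 - delta/2).
  by move: hfl => [h _]; rewrite hnm he2 in h.
have hd0 : 8 / delta <= INR d0 by case: hce.
set P := #|Pairs n m|.
have hP : (m * m <= P)%N by exact: (Pairs_big hn).
have h2e : (2 * e <= m * m)%N.
  apply/leP; apply: INR_le. rewrite INR_muln INR_muln. simpl (INR 2).
  have s4 : 4 <= Rpower (INR m) (1/2).
    rewrite sqrt_Rpower; last lra.
    rewrite -(sqrt_square 4); last lra. apply: sqrt_le_1_alt; lra.
  have hmm : Rpower (INR m) (3/2 - delta/2) * Rpower (INR m) (1/2) <= INR m * INR m.
    rewrite -Rpower_plus.
    have -> : INR m * INR m = Rpower (INR m) (INR 2) by rewrite Rpower_pow; [simpl; ring | lra].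
    apply: Rle_Rpower => //. simpl (INR 2). lra.
  have e0 : 0 <= INR e by apply: pos_INR.
  nra.
have heP : (e <= P)%N by lia.
have hbad := bad_count hn d0p d1 hd0 m1 he heP.
have hcomb := bern_nat hm16 hn.
set C := 'C(P, e).
have hbad2 : (2 * #|Bad n m e d0| <= C)%N.
  move: hbad hcomb. rewrite -/P -/C.
  set X := ((m * m) ^ n)%N. set Y := ((1 + m * m) ^ n)%N. set b := #|Bad n m e d0|.
  have X0' : (0 < X)%N by rewrite /X expn_gt0; apply/orP; left; rewrite muln_gt0; apply/andP; split; apply/ltP; apply: INR_lt; simpl; lra.
  move=> h1 h2.
  have : (2 * b * X <= C * X)%N by nia.
  by rewrite leq_pmul2r.
have hCe : (2 ^ e <= C)%N by apply: bin_pow2; lia.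
set G := [set E : sgraph n | asb (good_graph eps eps' c E)].
have hGsub : Cand n m e :\: Bad n m e d0 \subset G.
  apply/subsetP => E; rewrite in_setD => /andP[nB cE].
  rewrite inE. apply/asbP. exact: (good_of hn hfl hce cE nB).
have hG : (2 ^ e <= 2 * #|G|)%N.
  have := subset_leq_card hGsub. rewrite cardsD card_Cand -/P -/C.
  have := subset_leq_card (subsetIr (Cand n m e) (Bad n m e d0)).
  lia.
have hB0n : (4 * B0 ^ n <= 2 ^ e)%N.
  apply/leP; apply: INR_le. rewrite INR_muln !INR_expn.
  have hB0B : INR B0 <= B by case: hB0.
  have hb0 : 0 <= INR B0 by apply: pos_INR.
  have h1 : INR B0 ^ n <= B ^ n by apply: pow_incr; lra.
  have h2 : B ^ n = Rpower 2 (Rpower (INR n) (3/2 - delta)).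
    rewrite -Rpower_pow; last by apply: exp_pos.
    rewrite /B Rpower_mult. f_equal.
    have n0 : 0 < INR n by lra.
    rewrite /y -{2}(Rpower_1 (INR n)) // -Rpower_plus. f_equal; lra.
  have h3 : Rpower (INR n) (3/2 - delta) + 2 <= INR e.
    case: hfl => _ h. rewrite hnm he2 in h. lra.
  have h4 : 4 * Rpower 2 (Rpower (INR n) (3/2 - delta)) <= 2 ^ e.
    rewrite -Rpower_pow; last lra.
    have -> : 4 = Rpower 2 2.
      have -> : (2 : R) = INR 2 by simpl; lra.
      rewrite Rpower_pow; simpl; lra.
    rewrite -Rpower_plus. apply: Rle_Rpower; lra.
  rewrite (_ : INR 2 = 2); last by simpl; lra. rewrite (_ : INR 4 = 4); last by simpl; lra. rewrite h2 in h1. lra.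
have hGB : (2 * B0 ^ n <= #|G|)%N by lia.
have hB01 : (1 <= B0)%N by apply: (le_floor hB0); simpl; lra.
have [hf1 hf2] := sqrt_nat_bounds n.
have hk : (B0 * B0 + B0 < k)%N.
  apply/ltP; apply: INR_lt. rewrite /k -Rpower2_nat INR_addn INR_muln.
  have hB0B : INR B0 <= B by case: hB0.
  have hb0 : 1 <= INR B0 by apply: (le_INR 1); apply/leP.
  have hBB : B * B = Rpower 2 (2 * y) by rewrite /B -Rpower_plus; f_equal; ring.
  have h1 : Rpower 2 (2 * y + 2) <= Rpower 2 (INR f) by apply: Rle_Rpower; rewrite /y /f; lra.
  have h2 : Rpower 2 (2 * y + 2) = 4 * (B * B).
    rewrite Rpower_plus -hBB.
    have -> : Rpower 2 2 = 4.
      have -> : (2 : R) = INR 2 by simpl; lra.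
      rewrite Rpower_pow; simpl; lra.
    ring.
  nra.
have hkk : forall kc, is_ceil kc (Rpower 2 (sqrt (INR n))) -> (k <= kc)%N.
  move=> kc [_ h]. apply/leP; apply: INR_le. rewrite /k -Rpower2_nat.
  apply: Rle_trans h. apply: Rle_Rpower; rewrite /f; lra.
set Seq := [set g : {ffun 'I_k -> sgraph n} | [forall i, g i \in G]].
have cSeq : #|Seq| = (#|G| ^ k)%N.
  have -> : #|Seq| = #|ffun_on G : pred {ffun 'I_k -> sgraph n}|.
    apply: eq_card => g; rewrite inE. apply/forallP/ffun_onP => h x; exact: h.
  by rewrite card_ffun_on card_ord.
have hlt : (#|Cov n k B0| < #|Seq|)%N.
  apply: leq_ltn_trans (card_Cov n k B0) _. rewrite cSeq.
  set Z := ((B0 ^ n) ^ k)%N.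
  have Z1 : (0 < Z)%N by rewrite /Z !expn_gt0; apply/orP; left; lia.
  apply: (@leq_trans ((2 * B0 ^ n) ^ k)); last exact: expn_mono.
  rewrite expnMn -/Z mulnA ltn_pmul2r //.
  apply: leq_ltn_trans (_ : (B0.+1 * 2 ^ (B0 * B0) <= 2 ^ B0 * 2 ^ (B0 * B0))%N) _.
    by rewrite leq_mul2r ltn_expl // orbT.
  rewrite -expnD ltn_exp2l //. lia.
have : ~~ (Seq \subset Cov n k B0).
  apply/negP => hs. have := subset_leq_card hs. lia.
case/subsetPn => g gS gC.
exists [set g i | i in [set: 'I_k]].
have gG : forall i, g i \in G by move: gS; rewrite inE => /forallP.
have gGood : forall i, good_graph eps eps' c (g i) by move=> i; have := gG i; rewrite inE => /asbP.
split.
  by move=> E /imsetP [i _ ->].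
split.
  move=> kc hc. apply: leq_trans (hkk _ hc).
  apply: leq_trans (leq_imset_card _ _) _. by rewrite cardsT card_ord.
move=> [N [U [sU [hNB hind]]]].
move/negP: gC; apply.
have hNB0 : (N < B0.+1)%N by have := le_floor hB0 hNB; lia.
apply/bigcupP; exists (Ordinal hNB0) => //=.
apply/bigcupP; exists U.
  rewrite powersetE. apply/subsetP => X XU. rewrite inE.
  by move/forallP: sU => /(_ X); rewrite XU.
rewrite inE; apply/forallP => i.
apply: induced_fam.
  by case: (gGood i).
apply: hind. apply/imsetP; exists i => //.
Qed.
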